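(* Let $A$ be a one-dimensional integral domain with Noetherian prime spectrum. Then every sublocalization over $A$ is flat over $A$.
   Context: For an integral domain $A$ with field of fractions $K$, an overring of $A$ is a subring of $K$ containing $A$; it is a localization of $A$ if it equals $S^{-1}A$ for a multiplicatively closed set $S$ of nonzero elements of $A$, and a sublocalization over $A$ if it is an intersection of localizations of $A$. *)

(* Defs.v *)
From HB Require Import structures.
From mathcomp Require Import all_boot all_algebra.
Set Implicit Arguments. Unset Strict Implicit. Unset Printing Implicit Defensive.
Import GRing.Theory.
Local Open Scope ring_scope.

Section CommAlg.
Variable A : comNzRingType.

Definition is_ideal (I : A -> Prop) : Prop :=
  [/\ I 0, (forall x y, I x -> I y -> I (x + y)) & (forall a x, I x -> I (a * x))].

Definition is_prime_ideal (P : A -> Prop) : Prop :=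
  [/\ is_ideal P, ~ P 1 & (forall x y, P (x * y) -> P x \/ P y)].

Definition strict_incl (P Q : A -> Prop) : Prop :=
  (forall x, P x -> Q x) /\ exists x, Q x /\ ~ P x.

Definition krull_dim_one : Prop :=
  (exists P0 P1, [/\ is_prime_ideal P0, is_prime_ideal P1 & strict_incl P0 P1]) /\
  ~ (exists P0 P1 P2, [/\ is_prime_ideal P0, is_prime_ideal P1, is_prime_ideal P2,
                         strict_incl P0 P1 & strict_incl P1 P2]).

Definition zariski_closed (C : (A -> Prop) -> Prop) : Prop :=
  exists E : A -> Prop,
    forall P, C P <-> (is_prime_ideal P /\ forall x, E x -> P x).

Definition noetherian_spectrum : Prop :=
  forall C : nat -> (A -> Prop) -> Prop,
    (forall n, zariski_closed (C n)) ->
    (forall n P, C n.+1 P -> C n P) ->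
    exists N, forall n, (N <= n)%N -> forall P, C n P <-> C N P.

Definition mult_closed_nonzero (S : A -> Prop) : Prop :=
  [/\ S 1, (forall x y, S x -> S y -> S (x * y)) & ~ S 0].

End CommAlg.

Section Overrings.
Variables (A : idomainType) (K : fieldType) (f : {rmorphism A -> K}).

Definition fraction_field_of : Prop :=
  injective f /\ forall z : K, exists a b : A, b != 0 /\ z = f a / f b.

Definition overring (R : K -> Prop) : Prop :=
  [/\ forall a, R (f a), (forall x y, R x -> R y -> R (x - y))
    & (forall x y, R x -> R y -> R (x * y))].

Definition localization (S : A -> Prop) (z : K) : Prop :=
  exists a s, S s /\ z = f a / f s.

Definition sublocalization (R : K -> Prop) : Prop :=
  overring R /\
  exists F : (A -> Prop) -> Prop,
    (forall S, F S -> mult_closed_nonzero S) /\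
    forall z, R z <-> (forall S, F S -> localization S z).

(* Flatness of R as an A-module (A acting by multiplication through f),
   via the equational criterion: every linear relation among elements of R
   with coefficients in A is trivial. *)
Definition flat_over (R : K -> Prop) : Prop :=
  forall (n : nat) (a : 'I_n -> A) (r : 'I_n -> K),
    (forall i, R (r i)) ->
    \sum_(i < n) f (a i) * r i = 0 ->
    exists (m : nat) (b : 'I_n -> 'I_m -> A) (s : 'I_m -> K),
      [/\ forall j, R (s j),
          forall i, r i = \sum_(j < m) f (b i j) * s j
        & forall j, \sum_(i < n) a i * b i j = 0].

End Overrings.

(* Main.v *)
Require Import Defs.
From HB Require Import structures.
Set Warnings "-notation-overridden -ambiguous-paths".
From mathcomp Require Import all_boot all_algebra.
From mathcomp Require Import boolp classical_sets ring.
Set Implicit Arguments. Unset Strict Implicit. Unset Printing Implicit Defensive.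
Import GRing.Theory.
Local Open Scope ring_scope.

Section Alg.
Variable A : idomainType.

Lemma prime_ext (I U : A -> Prop) : is_ideal I -> U 1 ->
  (forall x y, U x -> U y -> U (x * y)) -> (forall x, I x -> ~ U x) ->
  exists Q, [/\ is_prime_ideal Q, (forall x, I x -> Q x) & forall x, Q x -> ~ U x].
Proof.
move=> [I0 ID IM] U1 UM IU.
pose Pr (X : set A) := is_ideal (fun z => X z \/ I z) /\
   forall x, X x \/ I x -> ~ U x.
have Pr0 : Pr set0.
  split; last by move=> x [[]|/IU].
  split; [by right| |].
  - by move=> x y [[]|Ix] [[]|Iy]; right; apply: ID.
  - by move=> a x [[]|Ix]; right; apply: IM.
have [M [[[M0 MD MM] MU] Mmax]] : exists M, Pr M /\ forall B, proper M B -> ~ Pr B.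
  apply: Zorn_bigcup => F FP Ftot.
  pose Y := bigcup F (fun X : set A => X).
  have com : forall x y, (Y x \/ I x) -> (Y y \/ I y) ->
      exists X, [/\ Pr X, subset X Y, X x \/ I x & X y \/ I y].
    move=> x y [[X1 FX1 X1x]|Ix] [[X2 FX2 X2y]|Iy].
    - have [s12|s21] := Ftot _ _ FX1 FX2.
      + exists X2; split; [exact: FP| |left; exact: s12|by left].
        by move=> z X2z; exists X2.
      + exists X1; split; [exact: FP| |by left|left; exact: s21].
        by move=> z X1z; exists X1.
    - exists X1; split; [exact: FP| |by left|by right].
      by move=> z X1z; exists X1.
    - exists X2; split; [exact: FP| |by right|by left].
      by move=> z X2z; exists X2.
    - by exists set0; split=> //; right.
  split; [split|].
  - by right.
  - move=> x y Hx Hy; have [X [[[_ XD _] _] XY Hx' Hy']] := com _ _ Hx Hy.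
    have [Xx|Ix] := XD x y Hx' Hy'; first by left; apply: XY.
    by right.
  - move=> a x Hx; have [X [[[_ _ XM] _] XY Hx' _]] := com _ _ Hx Hx.
    have [Xx|Ix] := XM a x Hx'; first by left; apply: XY.
    by right.
  - move=> x Hx; have [X [[_ XU] _ Hx' _]] := com _ _ Hx Hx.
    exact: XU.
pose Mc := fun z => M z \/ I z.
exists Mc; split.
- split; [by split| by move/MU|].
  move=> x y Mxy; apply: contrapT => Hn.
  have [nx ny] : ~ Mc x /\ ~ Mc y by split=> H; apply: Hn; [left|right].
  have ext : forall w, ~ Mc w -> exists m a, Mc m /\ U (m + a * w).
    move=> w nw; apply: contrapT => Hne.
    pose B := fun z => exists m a, Mc m /\ z = m + a * w.
    apply: (Mmax B).
    + split.
      * by move=> z Mz; exists z, 0; rewrite mul0r addr0; split=> //; left.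
      * move=> sub; apply: nw; have : B w.
          by exists 0, 1; rewrite mul1r add0r; split=> //; right.
        by move/sub => ?; left.
    + have BI : forall z, B z \/ I z -> B z.
        move=> z [//|Iz]; exists z, 0; rewrite mul0r addr0; split=> //; by right.
      rewrite /Pr; split; [split|].
      * by left; exists 0, 0; rewrite mul0r addr0.
      * move=> x1 y1 /BI [m1 [a1 [Hm1 ->]]] /BI [m2 [a2 [Hm2 ->]]]; left.
        exists (m1 + m2), (a1 + a2); split; first exact: MD.
        by rewrite mulrDl addrACA.
      * move=> a1 x1 /BI [m1 [a2 [Hm1 ->]]]; left.
        exists (a1 * m1), (a1 * a2); split; first exact: MM.
        by rewrite mulrDr mulrA.
      * move=> z /BI [m1 [a1 [Hm1 ->]]] Uz; apply: Hne; by exists m1, a1.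
  have [m1 [a1 [Hm1 U1']]] := ext x nx.
  have [m2 [a2 [Hm2 U2']]] := ext y ny.
  apply: (MU _ _ (UM _ _ U1' U2')).
  have -> : (m1 + a1 * x) * (m2 + a2 * y) =
     m1 * (m2 + a2 * y) + ((a1 * x) * m2 + (a1 * a2) * (x * y)).
    by ring.
  apply: (MD); first by rewrite mulrC; apply: (MM).
  apply: (MD); exact: (MM).
- by move=> x Ix; right.
- by [].
Qed.

Lemma zero_prime : is_prime_ideal (fun x : A => x = 0).
Proof.
split; [split| |].
- by [].
- by move=> x y -> ->; rewrite addr0.
- by move=> a x ->; rewrite mulr0.
- by move/eqP; rewrite oner_eq0.
- by move=> x y /eqP; rewrite mulf_eq0 => /orP[/eqP|/eqP]; [left|right].
Qed.

Lemma no_chain (Hd : krull_dim_one A) (Q1 Q2 : A -> Prop) c y :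
  is_prime_ideal Q1 -> is_prime_ideal Q2 -> Q1 c -> c != 0 ->
  (forall x, Q1 x -> Q2 x) -> Q2 y -> ~ Q1 y -> False.
Proof.
move=> P1 P2 Q1c c0 sub Q2y nQ1y; apply: Hd.2.
exists (fun x : A => x = 0), Q1, Q2; split=> //.
- exact: zero_prime.
- split; last by exists c; split=> //; move/eqP: c0.
  by move=> x ->; case: P1 => [[]].
- by split=> //; exists y.
Qed.

Lemma prime_not1 (P : A -> Prop) : is_prime_ideal P -> ~ P 1.
Proof. by case. Qed.

Lemma prime_mul_not (P : A -> Prop) x y : is_prime_ideal P -> ~ P x -> ~ P y -> ~ P (x * y).
Proof. by move=> [_ _ Pm] nx ny /Pm []. Qed.

Lemma prime_pow_not (P : A -> Prop) y m : is_prime_ideal P -> ~ P y -> ~ P (y ^+ m).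
Proof.
move=> Pp ny; elim: m => [|m IH]; first by rewrite expr0; exact: prime_not1.
by rewrite exprS; apply: prime_mul_not.
Qed.

Lemma radical (Hd : krull_dim_one A) (Q : A -> Prop) p y :
  is_prime_ideal Q -> Q p -> p != 0 -> Q y ->
  exists t m, ~ Q t /\ exists c, t * y ^+ m = p * c.
Proof.
move=> Qpr Qp p0 Qy; apply: contrapT => H.
have [Q' [Q'pr Q'I Q'U]] : exists Q', [/\ is_prime_ideal Q',
    (forall x, (exists c, x = p * c) -> Q' x) &
    forall x, Q' x -> ~ (exists t m, ~ Q t /\ x = t * y ^+ m)].
  apply: prime_ext.
  - split.
    + by exists 0; rewrite mulr0.
    + by move=> x1 y1 [c1 ->] [c2 ->]; exists (c1 + c2); rewrite mulrDr.
    + by move=> a x1 [c1 ->]; exists (a * c1); rewrite mulrCA.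
  - by exists 1, 0%N; rewrite expr0 mulr1; split=> //; exact: prime_not1.
  - move=> x1 y1 [t1 [m1 [nt1 ->]]] [t2 [m2 [nt2 ->]]].
    exists (t1 * t2), (m1 + m2)%N; split; first exact: prime_mul_not.
    by rewrite exprD; ring.
  - move=> x [c ->] [t [m [nt E]]]; apply: H; exists t, m; split=> //.
    by exists c; rewrite -E.
apply: (no_chain Hd Q'pr Qpr _ p0 _ Qy).
- by apply: Q'I; exists 1; rewrite mulr1.
- move=> x Q'x; apply: contrapT => nQx; apply: (Q'U _ Q'x).
  by exists x, 0%N; rewrite expr0 mulr1.
- move=> Q'y; apply: (Q'U _ Q'y); exists 1, 1%N; rewrite expr1 mul1r; split=> //.
  exact: prime_not1.
Qed.

Definition same_id (Q P : A -> Prop) := forall x, Q x <-> P x.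

Definition Psi (p : A) (P : A -> Prop) (W : (A -> Prop) -> Prop) :=
  exists y m, ~ P y /\ forall Q, W Q -> ~ same_id Q P ->
     exists t, ~ Q t /\ exists c, t * y ^+ m = p * c.

Lemma psi_empty p P (W : (A -> Prop) -> Prop) : is_prime_ideal P ->
  ~ (exists Q, W Q) -> Psi p P W.
Proof.
move=> Ppr nW; exists 1, 0%N; split; first exact: prime_not1.
by move=> Q WQ; case: nW; exists Q.
Qed.

Lemma psi_base (Hd : krull_dim_one A) p (P : A -> Prop) (W : (A -> Prop) -> Prop) :
  p != 0 -> is_prime_ideal P -> (forall Q, W Q -> is_prime_ideal Q /\ Q p) ->
  is_prime_ideal (fun x => forall Q, W Q -> Q x) -> Psi p P W.
Proof.
move=> p0 Ppr WP Ipr; set I := (fun x => forall Q, W Q -> Q x) in Ipr.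
have Ip : I p by move=> Q /WP [].
have allI : forall Q, W Q -> same_id Q I.
  move=> Q WQ x; split; last by apply.
  move=> Qx; apply: contrapT => nIx.
  exact: (no_chain Hd Ipr (WP _ WQ).1 Ip p0 (fun z Iz => Iz Q WQ) Qx nIx).
case: (pselect (same_id I P)) => [IP|nIP].
  exists 1, 0%N; split; first exact: prime_not1.
  move=> Q WQ nQP; case: nQP => x; rewrite (allI Q WQ x); exact: IP.
have [y [Iy nPy]] : exists y, I y /\ ~ P y.
  apply: contrapT => H.
  have sub : forall x, I x -> P x.
    by move=> x Ix; apply: contrapT => nPx; apply: H; exists x.
  apply: nIP => x; split; first exact: sub.
  move=> Px; apply: contrapT => nIx.
  exact: (no_chain Hd Ipr Ppr Ip p0 sub Px nIx).
have [t [m [nIt [c E]]]] := radical Hd Ipr Ip p0 Iy.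
exists y, m; split=> // Q WQ _; exists t; split; last by exists c.
by rewrite (allI Q WQ t).
Qed.

Lemma psi_union p (P : A -> Prop) (W W1 W2 : (A -> Prop) -> Prop) :
  is_prime_ideal P -> Psi p P W1 -> Psi p P W2 ->
  (forall Q, W Q -> W1 Q \/ W2 Q) -> Psi p P W.
Proof.
move=> Ppr [y1 [m1 [ny1 H1]]] [y2 [m2 [ny2 H2]]] sub.
exists (y1 * y2), (m1 + m2)%N; split; first exact: prime_mul_not.
move=> Q WQ nQP; case: (sub Q WQ) => [W1Q|W2Q].
- have [t [nt [c E]]] := H1 Q W1Q nQP; exists t; split=> //.
  exists (c * y1 ^+ m2 * y2 ^+ (m1 + m2)).
  have -> : t * (y1 * y2) ^+ (m1 + m2) = (t * y1 ^+ m1) * (y1 ^+ m2 * y2 ^+ (m1 + m2)).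
    by rewrite exprMn exprD; ring.
  by rewrite E; ring.
- have [t [nt [c E]]] := H2 Q W2Q nQP; exists t; split=> //.
  exists (c * y1 ^+ (m1 + m2) * y2 ^+ m1).
  have -> : t * (y1 * y2) ^+ (m1 + m2) = (t * y2 ^+ m2) * (y1 ^+ (m1 + m2) * y2 ^+ m1).
    by rewrite exprMn !exprD; ring.
  by rewrite E; ring.
Qed.

Lemma closed_prime (W : (A -> Prop) -> Prop) Q : zariski_closed W -> W Q -> is_prime_ideal Q.
Proof. by move=> [E HE] /HE []. Qed.

Lemma nonprime_split (W : (A -> Prop) -> Prop) :
  zariski_closed W -> (exists Q, W Q) ->
  ~ is_prime_ideal (fun x => forall Q, W Q -> Q x) ->
  exists x y, [/\ ~ (forall Q, W Q -> Q x), ~ (forall Q, W Q -> Q y) &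
                  forall Q, W Q -> Q (x * y)].
Proof.
move=> Wc [Q0 WQ0] nI; apply: contrapT => H; apply: nI; split.
- split.
  + by move=> Q /(closed_prime Wc) [[]].
  + move=> x y Hx Hy Q WQ; case: (closed_prime Wc WQ) => [[_ D _] _ _]; exact: D (Hx Q WQ) (Hy Q WQ).
  + move=> a x Hx Q WQ; case: (closed_prime Wc WQ) => [[_ _ M] _ _]; exact: M (Hx Q WQ).
- by move=> H1; apply: (prime_not1 (closed_prime Wc WQ0)); apply: H1.
- move=> x y Hxy; apply: contrapT => nxy; apply: H; exists x, y; split=> //.
  + by move=> Hx; apply: nxy; left.
  + by move=> Hy; apply: nxy; right.
Qed.

Lemma psi_all (Hd : krull_dim_one A) (Hn : noetherian_spectrum A) p (P : A -> Prop) :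
  p != 0 -> is_prime_ideal P -> Psi p P (fun Q => is_prime_ideal Q /\ Q p).
Proof.
move=> p0 Ppr.
pose good (W : (A -> Prop) -> Prop) :=
  [/\ zariski_closed W, forall Q, W Q -> Q p & ~ Psi p P W].
have step : forall W, good W -> exists W', [/\ good W', forall Q, W' Q -> W Q &
    exists Q, W Q /\ ~ W' Q].
  move=> W [Wc Wp nPsi].
  have [Wne|We] := pselect (exists Q, W Q); last by case: nPsi; exact: psi_empty.
  have [Ipr|nIpr] := pselect (is_prime_ideal (fun x => forall Q, W Q -> Q x)).
    case: nPsi; apply: psi_base => // Q WQ; split; [exact: closed_prime Wc WQ|exact: Wp].
  have [x [y [nx ny Hxy]]] := nonprime_split Wc Wne nIpr.
  have [E HE] := Wc.
  have subc : forall z, ~ (forall Q, W Q -> Q z) ->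
      [/\ zariski_closed (fun Q => W Q /\ Q z), (forall Q, W Q /\ Q z -> W Q) &
       exists Q, W Q /\ ~ (W Q /\ Q z)].
    move=> z nz; split.
    - exists (fun w => E w \/ w = z) => Q; split.
      + move=> [/HE [Qpr QE] Qz]; split=> // w [/QE //|->] //.
      + move=> [Qpr QE]; split; last by apply: QE; right.
        by apply/HE; split=> // w Ew; apply: QE; left.
    - by move=> Q [].
    - apply: contrapT => H; apply: nz => Q WQ; apply: contrapT => nQz.
      by apply: H; exists Q; split=> // -[].
  have [Psi1|nPsi1] := pselect (Psi p P (fun Q => W Q /\ Q x)).
    have [Psi2|nPsi2] := pselect (Psi p P (fun Q => W Q /\ Q y)).
      case: nPsi; apply: (psi_union Ppr Psi1 Psi2) => Q WQ.
      have [_ _ Qm] := closed_prime Wc WQ.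
      by case: (Qm _ _ (Hxy Q WQ)) => H; [left|right].
    have [c1 s1 st1] := subc y ny.
    exists (fun Q => W Q /\ Q y); split=> //; split=> //.
    by move=> Q [/Wp].
  have [c1 s1 st1] := subc x nx.
  exists (fun Q => W Q /\ Q x); split=> //; split=> //.
  by move=> Q [/Wp].
apply: contrapT => nPsi.
pose T := {W : (A -> Prop) -> Prop | good W}.
have : forall w : T, exists w' : T, [/\ forall Q, sval w' Q -> sval w Q &
    exists Q, sval w Q /\ ~ sval w' Q].
  move=> [W gW]; have [W' [gW' s st]] := step W gW.
  by exists (exist _ W' gW').
move=> /choice [g Hg].
have g0 : good (fun Q => is_prime_ideal Q /\ Q p).
  split=> //; last by move=> Q [].
  exists (fun w => w = p) => Q; split => [[Qpr Qp]|[Qpr Qp]]; split=> //.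
    by move=> w ->.
  exact: Qp.
pose C n := sval (iter n g (exist _ _ g0)).
have [N HN] : exists N, forall n, (N <= n)%N -> forall Q, C n Q <-> C N Q.
  apply: Hn.
  - by move=> n; rewrite /C; case: (iter n g _) => W [].
  - by move=> n Q; rewrite /C /= => H; have [+ _] := Hg (iter n g (exist _ _ g0)); apply.
have [_ [Q [CQ nCQ]]] := Hg (iter N g (exist _ _ g0)).
by apply: nCQ; apply/(HN N.+1 (leqnSn N)).
Qed.
End Alg.

Section Main.
Variables (A : idomainType) (K : fieldType) (f : {rmorphism A -> K}).
Hypothesis Hff : fraction_field_of f.
Variable R : K -> Prop.
Hypothesis HR : sublocalization f R.

Lemma f_neq0 x : x != 0 -> f x != 0.
Proof.
move=> x0; apply/eqP => fx0; move/eqP: x0; apply.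
by apply: Hff.1; rewrite fx0 rmorph0.
Qed.

Lemma R_f a : R (f a). Proof. by case: HR => [[]]. Qed.
Lemma R_mul x y : R x -> R y -> R (x * y). Proof. by case: HR => [[_ _ M] _]; apply: M. Qed.

Definition ug (D : A -> Prop) := exists s : seq (A * K),
  (forall q, q \in s -> D q.1 /\ R q.2) /\ \sum_(q <- s) f q.1 * q.2 = 1.

Lemma ug_mono (D D' : A -> Prop) : (forall x, D x -> D' x) -> ug D -> ug D'.
Proof.
move=> sub [s [Hs Hsum]]; exists s; split=> // q qs.
by have [? ?] := Hs q qs; split=> //; apply: sub.
Qed.

Lemma ug_mul (D1 D2 D3 : A -> Prop) : ug D1 -> ug D2 ->
  (forall x y, D1 x -> D2 y -> D3 (x * y)) -> ug D3.
Proof.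
move=> [s1 [H1 S1]] [s2 [H2 S2]] H.
exists [seq (x.1 * y.1, x.2 * y.2) | x <- s1, y <- s2]; split.
  move=> q /allpairsP [[x y] [/= xs ys ->]] /=.
  have [D1x Rx] := H1 x xs; have [D2y Ry] := H2 y ys.
  by split; [exact: H|exact: R_mul].
rewrite big_allpairs_dep /=.
rewrite -S1 -[in RHS](mulr1 (\sum_(q <- s1) _)) -S2 mulr_suml.
apply: eq_bigr => x _; rewrite mulr_sumr; apply: eq_bigr => y _.
by rewrite rmorphM /=; ring.
Qed.

Definition Iz (z : K) (d : A) := exists c, f c = f d * z.

Hypothesis Hd : krull_dim_one A.
Hypothesis Hn : noetherian_spectrum A.

Lemma loc_ne0 (S : A -> Prop) s : mult_closed_nonzero S -> S s -> s != 0.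
Proof. by move=> [_ _ S0] Ss; apply/eqP => s0; apply: S0; rewrite -s0. Qed.

Lemma ug_single z : R z -> ug (Iz z).
Proof.
move=> Rz.
pose J a := exists s : seq (A * K),
  (forall q, q \in s -> Iz z q.1 /\ R q.2) /\ \sum_(q <- s) f q.1 * q.2 = f a.
have J1 : J 1 -> ug (Iz z) by move=> [s [Hs Ss]]; exists s; rewrite Ss rmorph1.
apply: J1; apply: contrapT => nJ1.
have R1 : R 1 by rewrite -(rmorph1 f); exact: R_f.
have [P [Ppr JP _]] : exists P, [/\ is_prime_ideal P, (forall x, J x -> P x) &
    forall x, P x -> ~ (x = 1)].
  apply: prime_ext => //.
  - split.
    + by exists [::]; rewrite big_nil rmorph0.
    + move=> x y [s1 [H1 S1]] [s2 [H2 S2]]; exists (s1 ++ s2); split.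
        by move=> q; rewrite mem_cat => /orP [/H1|/H2].
      by rewrite big_cat S1 S2 rmorphD.
    + move=> c x [s1 [H1 S1]]; exists [seq (q.1, f c * q.2) | q <- s1]; split.
        move=> q /mapP [q' q's ->] /=; have [? ?] := H1 q' q's.
        by split=> //; apply: R_mul => //; exact: R_f.
      rewrite big_map rmorphM /= -S1 mulr_sumr; apply: eq_bigr => q _ /=; ring.
  - by move=> x y -> ->; rewrite mulr1.
  - by move=> x Jx x1; apply: nJ1; rewrite -x1.
have IzJ : forall d, Iz z d -> J d.
  move=> d Hd'; exists [:: (d, 1)]; split.
    by move=> q; rewrite inE => /eqP -> /=.
  by rewrite big_cons big_nil /= mulr1 addr0.
have [a0 [b0 [b00 zE]]] := Hff.2 z.
have fb0 := f_neq0 b00.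
have Izb0 : Iz z b0 by exists a0; rewrite zE mulrC divfK.
have [_ [F [Fs Fl]]] := HR.
have [Hsep|Hmeet] := pselect (exists S, F S /\ forall s, S s -> ~ P s).
  case: Hsep => S [FS Sdis].
  have [a [s [Ss zE']]] := (Fl z).1 Rz S FS.
  apply: (Sdis s Ss); apply: JP; apply: IzJ; exists a.
  by rewrite zE' mulrC divfK //; apply: f_neq0; exact: (loc_ne0 (Fs S FS) Ss).
have meet : forall S, F S -> exists s, S s /\ P s.
  move=> S FS; apply: contrapT => H; apply: Hmeet; exists S; split=> // s Ss Ps.
  by apply: H; exists s.
have [y [m [nPy Hy]]] := psi_all Hd Hn b00 Ppr.
pose w := f (y ^+ m) / f b0.
have Rw : R w.
  apply/(Fl w) => S FS.
  have [Sc [S1 SM S0]] := (Fs S FS, Fs S FS).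
  have [t [St [c Ec]]] : exists t, S t /\ exists c, t * y ^+ m = b0 * c.
    apply: contrapT => H.
    have [Q [Qpr LQ QS]] : exists Q, [/\ is_prime_ideal Q,
       (forall x, (exists c, x * y ^+ m = b0 * c) -> Q x) & forall x, Q x -> ~ S x].
      apply: prime_ext => //.
      - split.
        + by exists 0; rewrite mul0r mulr0.
        + by move=> x1 y1 [c1 E1] [c2 E2]; exists (c1 + c2); rewrite mulrDl E1 E2 mulrDr.
        + by move=> x1 y1 [c1 E1]; exists (x1 * c1); rewrite -mulrA E1 mulrCA.
      - by move=> x [c E] Sx; apply: H; exists x; split=> //; exists c.
    have Qb0 : Q b0 by apply: LQ; exists (y ^+ m); rewrite mulrC.
    have [s [Ss Ps]] := meet S FS.
    have nsame : ~ same_id Q P.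
      by move=> sm; apply: (QS s) => //; apply/sm.
    have [t [nQt [c Ec]]] := Hy Q (conj Qpr Qb0) nsame.
    by apply: nQt; apply: LQ; exists c.
  exists c, t; split=> //.
  have ft := f_neq0 (loc_ne0 Sc St).
  apply/eqP; rewrite /w eqr_div // -!rmorphM /= mulrC Ec mulrC //.
have Jy : J (y ^+ m).
  exists [:: (b0, w)]; split.
    by move=> q; rewrite inE => /eqP -> /=.
  by rewrite big_cons big_nil /= addr0 /w mulrC divfK.
exact: (prime_pow_not Ppr nPy (JP _ Jy)).
Qed.

Lemma ug_fin n (r : 'I_n -> K) : (forall i, R (r i)) ->
  ug (fun d => forall i, exists c, f c = f d * r i).
Proof.
move=> Rr.
suff : forall k, ug (fun d => forall i : 'I_n, (i < k)%N -> exists c, f c = f d * r i).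
  by move/(_ n); apply: ug_mono => d H i; apply: H.
elim=> [|k IH].
  exists [:: (1, 1)]; split.
    by move=> q; rewrite inE => /eqP -> /=; split=> //; rewrite -(rmorph1 f); exact: R_f.
  by rewrite big_cons big_nil /= rmorph1 mulr1 addr0.
case: (ltnP k n) => kn; last first.
  apply: ug_mono IH => d H i ik; apply: H; exact: leq_trans (ltn_ord i) kn.
apply: (ug_mul IH (ug_single (Rr (Ordinal kn)))) => x y Hx [c Hc] i.
rewrite ltnS leq_eqVlt => /orP [/eqP ik|ik].
  have -> : i = Ordinal kn by apply: val_inj.
  by exists (x * c); rewrite !rmorphM /= Hc mulrA.
have [c' Hc'] := Hx i ik; exists (c' * y); rewrite !rmorphM /= Hc'; ring.
Qed.

Lemma flat_main : flat_over f R.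
Proof.
move=> n a r Rr Hsum.
have [s [Hs S1]] := ug_fin Rr.
have Hb : forall i (j : 'I_(size s)), exists c, f c = f (nth (0, 0) s j).1 * r i.
  move=> i j; have [D _] := Hs _ (mem_nth (0, 0) (ltn_ord j)); exact: D.
have [b Hbb] : exists b : 'I_n -> 'I_(size s) -> A, forall i j,
    f (b i j) = f (nth (0, 0) s j).1 * r i.
  have /choice [b Hb'] : forall ij : 'I_n * 'I_(size s), exists c,
      f c = f (nth (0, 0) s ij.2).1 * r ij.1 by move=> [i j]; apply: Hb.
  by exists (fun i j => b (i, j)) => i j; apply: (Hb' (i, j)).
exists (size s), b, (fun j => (nth (0, 0) s j).2); split.
- by move=> j; have [_ ?] := Hs _ (mem_nth (0, 0) (ltn_ord j)).
- move=> i; under eq_bigr do rewrite Hbb.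
  rewrite -[LHS]mulr1 -S1 (big_nth (0, 0)) big_mkord mulr_sumr.
  by apply: eq_bigr => j _; ring.
- move=> j; apply: Hff.1; rewrite rmorph0 rmorph_sum /=.
  under eq_bigr do rewrite rmorphM /= Hbb.
  apply: (@eq_trans _ _ (f (nth (0, 0) s j).1 * \sum_(i < n) f (a i) * r i)); last by rewrite Hsum mulr0.
  rewrite mulr_sumr.
  by apply: eq_bigr => i _; ring.
Qed.
End Main.

Unset Implicit Arguments.
Theorem theorem2p12 (A : idomainType) (K : fieldType) (f : {rmorphism A -> K}) :
  fraction_field_of f ->
  krull_dim_one A ->
  noetherian_spectrum A ->
  forall R : K -> Prop, sublocalization f R -> flat_over f R.
Proof.
move=> Hff Hd Hn R HR; exact: (flat_main Hff HR Hd Hn).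
Qed.
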